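(* Let $H$ be a group of isometries of $\mathcal{C}_k$ (generated by Euclidean isometries, phases and the rotation map) which contains the circle translation $S_\varphi$. Then $\mathcal{C}_k(H)\neq\emptyset$ only if $\varphi=2r\pi/k$ for some $r\in\mathbb{Z}$.
   Context: Fix $\mu_0>0$, $S^1=\mathbb{R}/\frac{2\pi}{\mu_0}\mathbb{Z}$. $\mathcal{C}_k$ is the moduli space of framed $SU(2)$ calorons on $S^1\times\mathbb{R}^3$ (finite-action anti-self-dual $SU(2)$ connections with the standard caloron boundary conditions) with monopole charges $(k,k)$ and equal monopole masses $\mu_0/2$, modulo gauge transformations equal to the identity at spatial infinity. $S_\varphi$ is the rotation of the circle factor by angle $\varphi$ (i.e. $t\mapsto t+\varphi/\mu_0$), acting on calorons by pullback. $\mathcal{C}_k(H)$ is the set of $[A]\in\mathcal{C}_k$ with $[h\cdot A]=[A]$ for all $h\in H$. Known correspondence (Charbonneau–Hurtubise): $\mathcal{C}_k$ is biholomorphic to the moduli space of non-singular monad matrices $(A,B,C,D)$ ($A,B\in Mat_{k\times k}(\mathbb{C})$, $A$ invertible, $C\in Mat_{k\times 2}$, $D\in Mat_{2\times k}$, $[A,B]+CD=0$ plus full-rank conditions, modulo simultaneous $GL(k,\mathbb{C})$ conjugation $(gAg^{-1},gBg^{-1},gC,Dg^{-1})$), under which $S_\varphi$ acts by $(A,B,C,D)\mapsto(e^{-i\varphi}A,B,C\,\mathrm{adj}(\sigma_\varphi),\sigma_\varphi D)$ with $\sigma_\varphi=\mathrm{diag}(e^{-3i\varphi/4},e^{-i\varphi/4})$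 and $\mathrm{adj}(\sigma)=\det(\sigma)\sigma^{-1}$. *)

(* Defs.v *)
From mathcomp Require Import all_boot all_order all_algebra.
From mathcomp Require Import complex.
From mathcomp Require Import reals trigo.
Set Implicit Arguments. Unset Strict Implicit. Unset Printing Implicit Defensive.
Import Order.TTheory GRing.Theory Num.Theory.
Local Open Scope ring_scope.
Local Open Scope complex_scope.

Section Monads.
Variable R : realType.
Local Notation C := (R[i]).

Definition expi (x : R) : C := (cos x) +i* (sin x).

Record monad (k : nat) := Monad {
  mA : 'M[C]_k;
  mB : 'M[C]_k;
  mC : 'M[C]_(k, 2);
  mD : 'M[C]_(2, k) }.

(* Non-singular monad (Charbonneau--Hurtubise): A invertible,
   [A,B] + CD = 0, and for all (x,y) in C^2 the map
   alpha = (x - A ; y - B ; D) : C^k -> C^k + C^k + C^2 is injective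
   (full column rank k), and beta = (-(y - B), x - A, C) :
   C^k + C^k + C^2 -> C^k is surjective (full row rank k). *)
Definition monad_alpha k (M : monad k) (x y : C) : 'M[C]_(k + k + 2, k) :=
  col_mx (col_mx (x%:M - mA M) (y%:M - mB M)) (mD M).
Definition monad_beta k (M : monad k) (x y : C) : 'M[C]_(k, k + k + 2) :=
  row_mx (row_mx (- (y%:M - mB M)) (x%:M - mA M)) (mC M).

Definition nonsingular_monad k (M : monad k) : Prop :=
  [/\ mA M \in unitmx,
      mA M *m mB M - mB M *m mA M + mC M *m mD M = 0,
      (forall x y : C, \rank (monad_alpha M x y) = k) &
      (forall x y : C, \rank (monad_beta M x y) = k)].

Definition gl_act k (g : 'M[C]_k) (M : monad k) : monad k :=
  Monad (g *m mA M *m invmx g) (g *m mB M *m invmx g)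
        (g *m mC M) (mD M *m invmx g).

(* Two monads represent the same point of the moduli space C_k. *)
Definition monad_equiv k (M N : monad k) : Prop :=
  exists2 g : 'M[C]_k, g \in unitmx & N = gl_act g M.

Definition sigma (phi : R) : 'M[C]_2 :=
  diag_mx (\row_(j < 2) if j == 0 then expi (- (3%:R * phi / 4%:R))
                        else expi (- (phi / 4%:R))).
Definition adjm2 (s : 'M[C]_2) : 'M[C]_2 := \det s *: invmx s.

Definition S_rot k (phi : R) (M : monad k) : monad k :=
  Monad (expi (- phi) *: mA M) (mB M) (mC M *m adjm2 (sigma phi))
        (sigma phi *m mD M).

(* A map on representatives that descends to a well-defined map of the
   moduli space C_k (preserves non-singularity and the equivalence). *)
Definition moduli_map k (h : monad k -> monad k) : Prop :=
  (forall M, nonsingular_monad M -> nonsingular_monad (h M)) /\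
  (forall M N, monad_equiv M N -> monad_equiv (h M) (h N)).

Definition fixed_points k (H : (monad k -> monad k) -> Prop)
  (M : monad k) : Prop :=
  nonsingular_monad M /\ forall h, H h -> monad_equiv (h M) M.

End Monads.

(* Main.v *)
Require Import Defs.
From mathcomp Require Import all_boot all_order all_algebra.
From mathcomp Require Import complex.
From mathcomp Require Import reals trigo.
From mathcomp Require Import ring.
Import Order.TTheory GRing.Theory Num.Theory.
Local Open Scope ring_scope.

Lemma cos2pin (R : realType) (n : int) :
  cos (pi *+ 2 * n%:~R) = 1 :> R /\ sin (pi *+ 2 * n%:~R) = 0 :> R.
Proof.
have hp : forall m : nat, cos ((pi : R) *+ 2 * m%:R) = 1 /\ sin ((pi : R) *+ 2 * m%:R) = 0.
  move=> m; rewrite mulr_natr.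
  have := periodicn (@cosD2pi R) m 0; have := periodicn (@sinD2pi R) m 0.
  by rewrite !add0r cos0 sin0 => -> ->.
case: n => m; first exact: hp.
rewrite NegzE mulrNz mulrN cosN sinN; have [-> ->] := hp m.+1.
by rewrite oppr0.
Qed.

Lemma cos1_2pi (R : realType) (x : R) : cos x = 1 ->
  exists n : int, x = pi *+ 2 * n%:~R.
Proof.
move=> cx.
have sx : sin x = 0.
  have := cos2Dsin2 x; rewrite cx expr1n => /eqP; rewrite -subr_eq0 addrAC subrr add0r.
  by rewrite sqrf_eq0 => /eqP.
set T := (pi : R) *+ 2.
have T0 : 0 < T by rewrite pmulrn_lgt0 // pi_gt0.
set n := Num.floor (x / T).
exists n.
set y := x - T * n%:~R.
have y0 : 0 <= y.
  rewrite subr_ge0 -ler_pdivlMl // mulrC; exact: floor_le.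
have yT : y < T.
  rewrite ltrBlDl.
  have := floorD1_gt (x / T); rewrite -/n ltr_pdivrMr // intrD mulrDl mul1r.
  by rewrite (mulrC n%:~R).
have cy : cos y = 1.
  have [c s] := cos2pin R n.
  by rewrite /y cosD cosN sinN c s cx sx oppr0 mulr0 subr0 mulr1.
have pi0 : (0:R) <= pi by exact: pi_ge0.
case: (lerP y pi) => ypi.
  have : y = 0.
    apply: cos_inj; rewrite ?in_itv /= ?y0 ?ypi ?lexx ?pi0 //.
    by rewrite cy cos0.
  by move/eqP; rewrite subr_eq0 => /eqP.
exfalso.
have : T - y = 0.
  apply: cos_inj; rewrite ?in_itv /= ?lexx ?pi0 //.
  - rewrite subr_ge0 (ltW yT) /= lerBlDl /T mulr2n lerD2r ltW //.
  - by rewrite addrC cosD2pi cosN cy cos0.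
by move/eqP; rewrite subr_eq0 => /eqP yE; move: yT; rewrite yE ltxx.
Qed.

Local Open Scope complex_scope.
Lemma expiD (R : realType) (a b : R) : expi a * expi b = expi (a + b).
Proof.
rewrite /expi cosD sinD; apply/eqP; rewrite eq_complex /=.
apply/andP; split; apply/eqP; ring.
Qed.

Lemma expiX (R : realType) (a : R) k : expi a ^+ k = expi (a *+ k).
Proof.
elim: k => [|k IH].
  by rewrite expr0 mulr0n /expi cos0 sin0.
by rewrite exprS IH expiD mulrS.
Qed.

Local Close Scope complex_scope.

Theorem mainTheorem4 (R : realType) (k : nat) (hk : (0 < k)%N) (phi : R)
  (H : (monad R k -> monad R k) -> Prop) :
  (forall h, H h -> moduli_map h) ->
  (forall g h, H g -> H h -> H (g \o h)) ->
  H id ->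
  H (S_rot phi) ->
  (exists M : monad R k, fixed_points H M) ->
  exists r : int, phi = 2%:R * r%:~R * pi / k%:R.
Proof.
move=> _ _ _ HS [M [[Au _ _ _] hfix]].
have [g gu E] := hfix _ HS.
have dE : \det (mA M) = \det (mA (gl_act g (S_rot phi M))) by rewrite -E.
move: dE; rewrite /= !det_mulmx det_inv detZ.
have dAu : \det (mA M) \is a GRing.unit by rewrite -unitmxE.
have dgu : \det g \is a GRing.unit by rewrite -unitmxE.
rewrite mulrC mulrA mulVr // mul1r => /eqP.
rewrite -{1}[\det (mA M)]mul1r (can2_eq (mulrK dAu) (divrK dAu)) mulrK //.
rewrite expiX eq_sym => /eqP e1.
have : cos (- phi *+ k) = 1.
  by have := congr1 (@complex.Re R) e1.
move=> /cos1_2pi [n hn].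
exists (- n).
have k0 : (k%:R : R) != 0 by rewrite pnatr_eq0 -lt0n.
apply: (mulIf k0); rewrite mulfVK //.
rewrite -mulr_natr mulNr in hn.
have -> : phi * k%:R = - (pi *+ 2 * n%:~R) by rewrite -hn opprK.
rewrite intrN mulr2n; ring.
Qed.
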